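(* Let $m\ge1$, $\delta\in(0,\tfrac12)$, $\epsilon\in(0,1)$, and let $r(m,\epsilon):=\max\{r\in\{0,\dots,m\}: f^{avg}_{m,r}<1-\epsilon\}$ (with $r(m,\epsilon):=-1$ if this set is empty, and $\binom{m}{\le -1}:=0$). Then \[\frac{\binom{m}{\le r(m,\epsilon)}}{2^m}\ge 1-\frac{h(\delta)}{1-\epsilon}.\]
   Context: $h(\delta)=-\delta\log_2\delta-(1-\delta)\log_2(1-\delta)$ and $\binom{m}{\le r}=\sum_{i=0}^r\binom{m}{i}$. Every function $\mathbb{F}_2^m\to\mathbb{F}_2$ is uniquely a multilinear polynomial $\sum_{S\subseteq[m]}c_Sx_S$, $x_S=\prod_{i\in S}x_i$. Let $Z=(Z_x)_{x\in\mathbb{F}_2^m}$ have i.i.d. Bernoulli$(\delta)$ entries and let $W=(W_S)_{S\subseteq[m]}$ be the coefficient vector of the multilinear polynomial whose evaluation table is $Z$. Write $W_r=(W_S)_{|S|=r}$, $W_{>r}=(W_S)_{|S|>r}$. Define $f_{m,r}:=H(W_r\mid W_{>r})$ (base-2 Shannon conditional entropy) and $f^{avg}_{m,r}:=f_{m,r}/\binom{m}{r}$. *)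

(* Defs.v *)
From HB Require Import structures.
From mathcomp Require Import all_boot all_order all_algebra.
From mathcomp Require Import reals exp.
Set Implicit Arguments. Unset Strict Implicit. Unset Printing Implicit Defensive.
Import Order.TTheory GRing.Theory Num.Theory.
Local Open Scope ring_scope.

Section Defs.
Variable R : realType.

Definition log2 (x : R) : R := ln x / ln 2.

Definition hbin (d : R) : R := - d * log2 d - (1 - d) * log2 (1 - d).

Definition pt (m : nat) := {ffun 'I_m -> bool}.
Definition table (m : nat) := {ffun pt m -> bool}.
(* coefficient vectors of multilinear polynomials, indexed by S ⊆ [m] *)
Definition coefs (m : nat) := {ffun {set 'I_m} -> bool}.

Definition monom m (S : {set 'I_m}) (x : pt m) : bool := [forall i in S, x i].

Definition evalp m (c : coefs m) : table m :=
  [ffun x => \big[addb/false]_(S : {set 'I_m}) (c S && monom S x)].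

(* coefficient vector of the (unique) multilinear polynomial with table z *)
Definition coef_of m (z : table m) : coefs m :=
  odflt [ffun _ => false] [pick c : coefs m | evalp c == z].

(* i.i.d. Bernoulli(d) law of Z *)
Definition probZ m (d : R) (z : table m) : R :=
  \prod_(x : pt m) (if z x then d else 1 - d).

Definition condH (Om A B : finType) (p : Om -> R) (X : Om -> A) (Y : Om -> B) : R :=
  \sum_(a : A) \sum_(b : B)
    let pab := \sum_(w : Om | (X w == a) && (Y w == b)) p w in
    let pb := \sum_(w : Om | Y w == b) p w in
    if pab == 0 then 0 else - (pab * log2 (pab / pb)).

(* W_r (entries with |S| = r; other entries masked to false) *)
Definition W_eq m (r : nat) (z : table m) : coefs m :=
  [ffun S : {set 'I_m} => (#|S| == r) && coef_of z S].
Definition W_gt m (r : nat) (z : table m) : coefs m :=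
  [ffun S : {set 'I_m} => (r < #|S|)%N && coef_of z S].

Definition f_mr (m r : nat) (d : R) : R :=
  condH (@probZ m d) (@W_eq m r) (@W_gt m r).

Definition favg (m r : nat) (d : R) : R := f_mr m r d / ('C(m, r))%:R.

Definition r_me (m : nat) (d eps : R) : int :=
  if [exists r : 'I_m.+1, favg m r d < 1 - eps]
  then Posz (\max_(r : 'I_m.+1 | favg m r d < 1 - eps) (r : nat))
  else (-1)%R.

End Defs.

Definition binom_le (m : nat) (r : int) : nat :=
  \sum_(i < m.+1 | (Posz i <= r)%R) 'C(m, i).

(* Main.v *)
Require Import Defs.
From HB Require Import structures.
From mathcomp Require Import all_boot all_order all_algebra.
From mathcomp Require Import reals exp.
From mathcomp Require Import ring lra.
Import Order.TTheory GRing.Theory Num.Theory.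
Local Open Scope ring_scope.
Set Implicit Arguments. Unset Strict Implicit.

Section Ent.
Variables (R : realType) (Om : finType) (p : Om -> R).
Hypothesis hp : forall w, 0 < p w.

Definition mass (T : eqType) (K : Om -> T) (w : Om) : R :=
  \sum_(w' | K w' == K w) p w'.
Definition HK (T : eqType) (K : Om -> T) : R :=
  \sum_w p w * - log2 (mass K w).

Lemma mass_gt0 (T : eqType) (K : Om -> T) w : 0 < mass K w.
Proof.
rewrite /mass (bigD1 w) //=; apply: (lt_le_trans (hp w)); rewrite lerDl.
by apply: sumr_ge0 => i _; apply/ltW.
Qed.

Lemma sum_fiber (A : finType) (X : Om -> A) (G : Om -> A -> R) :
  \sum_a \sum_(w | X w == a) G w a = \sum_w G w (X w).
Proof.
rewrite [RHS](partition_big X xpredT) //=.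
by apply: eq_bigr => a _; apply: eq_bigr => w /eqP ->.
Qed.

Lemma log2_div (x y : R) : 0 < x -> 0 < y -> log2 (x / y) = log2 x - log2 y.
Proof.
move=> hx hy; rewrite /log2 ln_div ?posrE // mulrBl //.
Qed.

Lemma condH_eq (A B : finType) (X : Om -> A) (Y : Om -> B) :
  condH p X Y = \sum_w p w * - log2 (mass (fun w => (X w, Y w)) w / mass Y w).
Proof.
rewrite /condH pair_big /=.
transitivity (\sum_(u : A * B) \sum_(w | (X w, Y w) == u)
   - (p w * log2 ((\sum_(w' | (X w' == u.1) && (Y w' == u.2)) p w') /
              (\sum_(w' | Y w' == u.2) p w')))).
  apply: eq_bigr => -[a b] _ /=.
  rewrite sumrN -mulr_suml.
  rewrite (eq_bigl (fun i => (X i == a) && (Y i == b))) //.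
  by case: eqP => [->|]; rewrite ?mul0r ?oppr0.
rewrite (sum_fiber (fun w => (X w, Y w)) (fun w u => - (p w * log2 ((\sum_(w' | (X w' == u.1) && (Y w' == u.2)) p w') /
              (\sum_(w' | Y w' == u.2) p w'))))) /=.
apply: eq_bigr => w _; rewrite mulrN /mass.
done.
Qed.

Lemma condH_HK (A B : finType) (X : Om -> A) (Y : Om -> B) :
  condH p X Y = HK (fun w => (X w, Y w)) - HK Y.
Proof.
rewrite condH_eq /HK -sumrB; apply: eq_bigr => w _.
rewrite log2_div ?mass_gt0 //; ring.
Qed.

Lemma condH_ge0 (A B : finType) (X : Om -> A) (Y : Om -> B) :
  0 <= condH p X Y.
Proof.
rewrite condH_eq; apply: sumr_ge0 => w _.
apply: mulr_ge0; first exact/ltW.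
rewrite oppr_ge0 /log2 pmulr_lle0 ?invr_gt0 ?ln_gt0 ?ltr1n //.
apply: ln_le0; rewrite ler_pdivrMr ?mass_gt0 // mul1r /mass.
rewrite [X in _ <= X](bigID (fun w' => X w' == X w)) /=.
rewrite (eq_bigl (fun i => (Y i == Y w) && (X i == X w))); last first.
  by move=> i /=; rewrite andbC.
rewrite lerDl; apply: sumr_ge0 => i _; exact/ltW.
Qed.

Lemma HK_ext (T1 T2 : eqType) (K1 : Om -> T1) (K2 : Om -> T2) :
  (forall w w', (K1 w' == K1 w) = (K2 w' == K2 w)) -> HK K1 = HK K2.
Proof.
move=> h; rewrite /HK /mass; apply: eq_bigr => w _.
by under eq_bigl do rewrite h.
Qed.

Lemma HK_fun (A B : finType) (X : Om -> A) (f : A -> B) :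
  HK (f \o X) <= HK X.
Proof.
have := condH_ge0 X (f \o X); rewrite condH_HK subr_ge0.
rewrite (HK_ext (K1 := fun w => (X w, (f \o X) w)) (K2 := X)) // => w w' /=.
case: (X w' =P X w) => [->|ne]; first by rewrite !eqxx.
by apply/negP => /eqP h; apply: ne; exact: (congr1 fst h).
Qed.

End Ent.

Section Spec.
Variables (R : realType) (m : nat) (d : R).
Hypotheses (d0 : 0 < d) (d1 : d < 1 / 2).

Definition q (b : bool) : R := if b then d else 1 - d.
Lemma q_gt0 b : 0 < q b.
Proof. by rewrite /q; case: b => //; rewrite subr_gt0; apply: (lt_trans d1); lra. Qed.

Lemma probZ_gt0 (z : table m) : 0 < probZ d z.
Proof. by apply: prodr_gt0 => x _; apply: q_gt0. Qed.

Lemma marginal (x : pt m) (g : bool -> R) :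
  \sum_(z : table m) probZ d z * g (z x) = \sum_b q b * g b.
Proof.
pose F (y : pt m) (b : bool) := if y == x then q b * g b else q b.
transitivity (\sum_(z : table m) \prod_y F y (z y)).
  apply: eq_bigr => z _; rewrite /probZ (bigD1 x) //= [RHS](bigD1 x) //=.
  rewrite /F eqxx -/(q (z x)) mulrAC; congr (_ * _).
  by apply: eq_bigr => y /negbTE ->.
rewrite -(bigA_distr_bigA (fun y b => F y b)) /= (bigD1 x) //= /F eqxx.
rewrite [X in _ * X]big1 ?mulr1 // => y /negbTE ->; rewrite big_bool /q /=; ring.
Qed.

Lemma sum_probZ : \sum_(z : table m) probZ d z = 1.
Proof.
pose x : pt m := [ffun => false].
rewrite (eq_bigr (fun z => probZ d z * (fun _ => 1) (z x))) ?marginal.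
  by rewrite (marginal x (fun _ => 1)) big_bool /q /=; ring.
by move=> z _; rewrite mulr1.
Qed.

Lemma log2_prod (I : finType) (F : I -> R) :
  (forall i, 0 < F i) -> log2 (\prod_i F i) = \sum_i log2 (F i).
Proof.
move=> hF.
suff [] : (0 < \prod_i F i) /\ (\sum_i log2 (F i) = log2 (\prod_i F i)) by [].
apply: (big_rec2 (fun a b => 0 < b /\ a = log2 b)).
  by rewrite /log2 ln1 mul0r.
move=> i a b _ [hb ->]; split; first by rewrite mulr_gt0.
by rewrite /log2 lnM ?posrE // mulrDl.
Qed.

Lemma aux2 (x : R) n : x *+ (2 ^ n) = 2 ^+ n * x.
Proof. by rewrite -natrX mulr_natl. Qed.

Lemma HK_id : HK (probZ d) (fun z : table m => z) = (2 ^+ m) * hbin d.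
Proof.
rewrite /HK /mass.
under eq_bigr do rewrite big_pred1_eq.
have e : forall z : table m, probZ d z * - log2 (probZ d z) =
   \sum_x probZ d z * - log2 (q (z x)).
  move=> z; rewrite {2}/probZ log2_prod; last by move=> i; exact: (q_gt0 (z i)).
  rewrite -sumrN mulr_sumr //.
rewrite (eq_bigr _ (fun z _ => e z)).
rewrite exchange_big /=.
under eq_bigr do rewrite (marginal _ (fun b => - log2 (q b))).
rewrite sumr_const big_bool /q /= card_ffun card_bool card_ord.
rewrite aux2 /hbin; ring.
Qed.

Definition Ar (r : nat) (z : table m) : coefs m :=
  [ffun S : {set 'I_m} => (r <= #|S|)%N && coef_of z S].

Lemma f_mr_HK r : f_mr m r d = HK (probZ d) (Ar r) - HK (probZ d) (Ar r.+1).
Proof.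
rewrite /f_mr condH_HK; last exact: probZ_gt0.
have -> : HK (probZ (m:=m) d) (W_gt (m:=m) r) = HK (probZ d) (Ar r.+1) by reflexivity.
congr (_ - _).
apply: HK_ext => w w'.
apply/idP/idP.
  move=> /eqP [/ffunP hE /ffunP hG]; apply/eqP/ffunP => S.
  move: (hE S) (hG S); rewrite !ffunE.
  by case: ltngtP => //= _ _ ->.
move=> /eqP /ffunP hA; apply/eqP; congr (_, _); apply/ffunP => S;
  move: (hA S); rewrite !ffunE; case: ltngtP => //= _ ->.
Qed.

Lemma HK_const (T : eqType) (K : table m -> T) :
  (forall w w', K w' = K w) -> HK (probZ d) K = 0.
Proof.
move=> hK; rewrite /HK big1 // => w _; rewrite /mass.
rewrite (eq_bigl xpredT) ?sum_probZ; last by move=> w'; rewrite (hK w w') eqxx.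
by rewrite /log2 ln1 mul0r oppr0 mulr0.
Qed.

Lemma sum_f_le : \sum_(r < m.+1) f_mr m r d <= 2 ^+ m * hbin d.
Proof.
under eq_bigr do rewrite f_mr_HK.
rewrite -(big_mkord xpredT (fun r => HK (probZ d) (Ar r) - HK (probZ d) (Ar r.+1))).
rewrite (telescope_sumr_eq (fun k => - HK (probZ d) (Ar k))) //; last first.
  by move=> k _; rewrite opprK addrC.
rewrite (@HK_const _ (Ar m.+1)); last first.
  move=> w w'; apply/ffunP => S; rewrite !ffunE.
  by have := max_card (pred_of_set S); rewrite card_ord ltnNge => ->.
rewrite oppr0 sub0r opprK -HK_id.
have := @HK_fun R (table m) (probZ d) probZ_gt0 _ _ (fun z => z) (Ar 0).
by [].
Qed.

Lemma f_ge0 r : 0 <= f_mr m r d.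
Proof. rewrite /f_mr; apply: condH_ge0; exact: probZ_gt0. Qed.

End Spec.

Lemma favg_ge (R : realType) (m : nat) (d eps : R) (r : 'I_m.+1) :
  ~~ (Posz r <= r_me m d eps)%R -> 1 - eps <= favg m r d.
Proof.
rewrite /r_me; case: ifP => [_|/negbT]; last first.
  by move=> /existsPn /(_ r) h _; rewrite leNgt h.
move=> hr; rewrite leNgt; apply/negP => hlt; apply: (negP hr).
rewrite lez_nat.
by apply: leq_bigmax_cond.
Qed.

Lemma sum_binom m : (\sum_(i < m.+1) 'C(m, i))%N = (2 ^ m)%N.
Proof.
have := expnDn 1 1 m; rewrite addn1 => ->.
by apply: eq_bigr => i _; rewrite !exp1n !muln1.
Qed.

Unset Implicit Arguments.
Theorem claim7p1 (R : realType) (m : nat) (d eps : R) :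
  (1 <= m)%N -> 0 < d -> d < 1 / 2 -> 0 < eps -> eps < 1 ->
  (binom_le m (r_me m d eps))%:R / 2 ^+ m >= 1 - hbin d / (1 - eps).
Proof.
move=> m1 d0 d1 e0 e1.
set rr := r_me m d eps.
set B := binom_le m rr.
have hS := @sum_f_le R m d d0 d1.
pose C (i : 'I_m.+1) : R := ('C(m, i))%:R.
have hlow : (1 - eps) * (2 ^+ m - B%:R) <= \sum_(r < m.+1) f_mr m r d.
  have hT : \sum_(i < m.+1) C i = 2 ^+ m.
    by rewrite /C -natr_sum sum_binom natrX.
  have hB : B%:R = \sum_(i < m.+1 | (Posz i <= rr)%R) C i.
    by rewrite /B /binom_le natr_sum.
  rewrite -hT hB (bigID (fun i : 'I_m.+1 => (Posz i <= rr)%R)) /= addrC addrK.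
  rewrite mulr_sumr [X in _ <= X](bigID (fun i : 'I_m.+1 => (Posz i <= rr)%R)) /=.
  rewrite -[X in X <= _]add0r; apply: lerD.
    by apply: sumr_ge0 => i _; apply: f_ge0.
  apply: ler_sum => i hi.
  have hC : 0 < C i by rewrite /C ltr0n bin_gt0 -ltnS.
  have := favg_ge hi; rewrite /favg -/(C i) ler_pdivlMr //.
have hN : 0 < (2:R) ^+ m by apply: exprn_gt0.
have he : 0 < 1 - eps by lra.
move: hS hlow; set N := (2:R) ^+ m; set h := hbin d; set b := B%:R => hS hlow.
have key : N - b <= N * (h / (1 - eps)).
  rewrite mulrA ler_pdivlMr // mulrC; exact: le_trans hlow hS.
rewrite ler_pdivlMr //.
move: key; set t := h / (1 - eps) => key.
rewrite mulrBl mul1r mulrC; lra.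
Qed.
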